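(* Let $n,m\in\mathbb{N}$. Let $X_1,\ldots,X_n,Y_1,\ldots,Y_m$ be real-valued random variables that are GTAI. Let $\Theta_1,\ldots,\Theta_n,\Delta_1,\ldots,\Delta_m$ be non-negative random variables, none degenerate at zero, arbitrarily dependent among themselves, each with distribution whose support is bounded from above (i.e. there are constants $b_i,d_j\in(0,\infty)$ with $\mathbb{P}(\Theta_i\le b_i)=\mathbb{P}(\Delta_j\le d_j)=1$), and such that the vector $(\Theta_1,\ldots,\Theta_n,\Delta_1,\ldots,\Delta_m)$ is independent of $(X_1,\ldots,X_n,Y_1,\ldots,Y_m)$. Then the products $\Theta_1X_1,\ldots,\Theta_nX_n,\Delta_1Y_1,\ldots,\Delta_mY_m$ are GTAI.
   Context: GTAI (generalized tail asymptotic independence): real-valued random variables $X_1,\ldots,X_n,Y_1,\ldots,Y_m$, whose distributions have supports unbounded from above, are called GTAI if (i) $\lim_{x_i\wedge x_k\wedge y_j\to\infty}\mathbb{P}(|X_i|>x_i\mid X_k>x_k,\,Y_j>y_j)=0$ for all $1\le i\neq k\le n$ and $j=1,\ldots,m$, and (ii) $\lim_{x_i\wedge y_j\wedge y_k\to\infty}\mathbb{P}(|Y_j|>y_j\mid X_i>x_i,\,Y_k>y_k)=0$ for all $1\le j\neq k\le m$ and $i=1,\ldots,n$. Here $a\wedge b=\min\{a,b\}$. *)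

(* Defs.v *)
From HB Require Import structures.
From mathcomp Require Import all_boot all_order all_algebra.
From mathcomp Require Import all_classical all_reals all_analysis.
Set Implicit Arguments. Unset Strict Implicit. Unset Printing Implicit Defensive.
Import Order.TTheory GRing.Theory Num.Theory.
Local Open Scope classical_set_scope.
Local Open Scope ring_scope.

(* Conditional probability P(A | B) = P(A ∩ B) / P(B)  (real-valued;
   by the MathComp convention x / 0 = 0 it is 0 when P(B) = 0). *)
Definition condP d (T : measurableType d) (R : realType)
  (P : probability T R) (A B : set T) : R :=
  fine (P (A `&` B)) / fine (P B).

Definition tail_lim0_3 (R : realType) (f : R -> R -> R -> R) : Prop :=
  forall e : R, 0 < e -> exists M : R, forall a b c : R,
    M < a -> M < b -> M < c -> `|f a b c| < e.

Definition unbounded_above d (T : measurableType d) (R : realType)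
  (P : probability T R) (Z : T -> R) : Prop :=
  forall x : R, (0 < P [set t | (x < Z t)%R])%E.

Definition GTAI d (T : measurableType d) (R : realType) (P : probability T R)
  (n m : nat) (X : 'I_n -> T -> R) (Y : 'I_m -> T -> R) : Prop :=
  [/\ (forall i, unbounded_above P (X i)),
      (forall j, unbounded_above P (Y j)),
      (forall (i k : 'I_n) (j : 'I_m), i != k ->
         tail_lim0_3 (fun xi xk yj =>
           condP P [set t | xi < `|X i t|]
                   ([set t | xk < X k t] `&` [set t | yj < Y j t])))
    & (forall (j k : 'I_m) (i : 'I_n), j != k ->
         tail_lim0_3 (fun yj xi yk =>
           condP P [set t | yj < `|Y j t|]
                   ([set t | xi < X i t] `&` [set t | yk < Y k t])))].

(* Independence of the random vector (U_1..U_p, V_1..V_q) from the random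
   vector (W_1..W_r, Z_1..Z_s): the joint law factorises on all products of
   Borel sets (measurable rectangles, which generate the product sigma-algebra). *)
Definition indep_vectors d (T : measurableType d) (R : realType)
  (P : probability T R) (p q r s : nat)
  (U : 'I_p -> T -> R) (V : 'I_q -> T -> R)
  (W : 'I_r -> T -> R) (Z : 'I_s -> T -> R) : Prop :=
  forall (A : 'I_p -> set R) (B : 'I_q -> set R)
         (C : 'I_r -> set R) (D : 'I_s -> set R),
    (forall i, measurable (A i)) -> (forall j, measurable (B j)) ->
    (forall i, measurable (C i)) -> (forall j, measurable (D j)) ->
    let E1 := [set t | (forall i, A i (U i t)) /\ (forall j, B j (V j t))] in
    let E2 := [set t | (forall i, C i (W i t)) /\ (forall j, D j (Z j t))] in
    P (E1 `&` E2) = (P E1 * P E2)%E.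

(* Main.v *)
Require Import Defs.
From HB Require Import structures.
From mathcomp Require Import all_boot all_order all_algebra.
From mathcomp Require Import all_classical all_reals all_analysis.
From mathcomp Require Import ring lra zify.
Import Order.TTheory GRing.Theory Num.Theory.
Local Open Scope classical_set_scope.
Local Open Scope ring_scope.

Section Aux.
Context {d : measure_display} {T : measurableType d} {R : realType}.
Variable (P : probability T R).

Lemma mpre (f : T -> R) (B : set R) :
  measurable_fun setT f -> measurable B -> measurable [set t | B (f t)].
Proof. by move=> mf mB; have := mf measurableT B mB; rewrite setTI. Qed.

Lemma mlt (f : T -> R) x : measurable_fun setT f -> measurable [set t | x < f t].
Proof.
move=> mf; apply: (@mpre f [set r | x < r]) => //.
rewrite (_ : [set r | x < r] = [set` `]x, +oo[]); first exact: measurable_itv.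
by apply/seteqP; split=> r /=; rewrite in_itv /= andbT.
Qed.

Lemma mle (f : T -> R) x : measurable_fun setT f -> measurable [set t | f t <= x].
Proof.
move=> mf; apply: (@mpre f [set r | r <= x]) => //.
rewrite (_ : [set r | r <= x] = [set` `]-oo, x]]); first exact: measurable_itv.
by apply/seteqP; split=> r /=; rewrite in_itv /=.
Qed.

Lemma mge (f : T -> R) x : measurable_fun setT f -> measurable [set t | x <= f t].
Proof.
move=> mf; apply: (@mpre f [set r | x <= r]) => //.
rewrite (_ : [set r | x <= r] = [set` `[x, +oo[]); first exact: measurable_itv.
by apply/seteqP; split=> r /=; rewrite in_itv /= andbT.
Qed.

Lemma Pge0 A : (0 <= P A)%E.
Proof. exact: measure_ge0. Qed.

Lemma Ple A B : measurable A -> measurable B -> A `<=` B -> (P A <= P B)%E.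
Proof. by move=> mA mB AB; apply: le_measure => //; rewrite inE. Qed.

Lemma Pfin A : measurable A -> P A \is a fin_num.
Proof. by move=> mA; apply: fin_num_measure. Qed.

Lemma as1 A E : measurable A -> measurable E -> P E = 1%E -> P (A `&` E) = P A.
Proof.
move=> mA mE PE; apply/le_anti/andP; split; first exact: measureIl.
have mC : measurable (~` E) by exact: measurableC.
rewrite {1}(_ : A = (A `&` E) `|` (A `&` ~` E)); last first.
  by rewrite -setIUr setUCr setIT.
apply: (le_trans (measureU2 _ _ _)); [exact: measurableI|exact: measurableI|].
have : (P (A `&` ~` E) <= 0)%E.
  have h0 : P (~` E) = 0%E by rewrite probability_setC // PE subee.
  by rewrite -h0; apply: measureIr.
move=> h.
by apply: (le_trans (leeD2l _ h)); rewrite adde0.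
Qed.

End Aux.

Section Grid.
Context {R : realType}.

Lemma natS_R (k : nat) : (k.+1%:R : R) = k%:R + 1.
Proof. by rewrite -addn1 natrD. Qed.

Lemma grid_uniq (w : R) (k j : nat) :
  k.+1%:R <= w -> w < k.+2%:R -> j.+1%:R <= w -> w < j.+2%:R -> k = j.
Proof.
move=> h1 h2 h3 h4.
have a : (k.+1 < j.+2)%N by rewrite -(ltr_nat R); exact: (le_lt_trans h1 h4).
have b : (j.+1 < k.+2)%N by rewrite -(ltr_nat R); exact: (le_lt_trans h3 h2).
lia.
Qed.

Lemma grid_mono (z u x h : R) (k : nat) : 0 < h -> 0 < x ->
  k.+1%:R <= z * h -> z * h < k.+2%:R -> x * h < k.+1%:R * u ->
  exists k' : nat, [/\ k'.+1%:R <= z * (2 * h), z * (2 * h) < k'.+2%:R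
                   & x * (2 * h) < k'.+1%:R * u].
Proof.
move=> h0 x0; rewrite !natS_R => h1 h2 h3.
have k0 : 0 <= (k%:R : R) by [].
case: (ltP (z * (2 * h)) (2 * k%:R + 3)) => c.
  exists (2 * k + 1)%N; rewrite !natS_R natrD natrM /=; split; lra.
exists (2 * k + 2)%N; rewrite !natS_R natrD natrM /=.
have u0 : 0 < u by nra.
split; nra.
Qed.

Lemma grid_cover (z u x : R) : 0 < z -> 0 < x -> x < z * u ->
  exists n k : nat, [/\ k.+1%:R <= z * 2 ^+ n, z * 2 ^+ n < k.+2%:R
                   & x * 2 ^+ n < k.+1%:R * u].
Proof.
move=> z0 x0 xzu.
have u0 : 0 < u by nra.
set A := u / (z * u - x).
have A0 : 0 < A by apply: divr_gt0; lra.
set n := (Num.trunc A).+1.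
have hA : A < 2 ^+ n.
  apply: (lt_le_trans (truncnS_gt A)).
  by rewrite -natrX ler_nat; apply: ltnW; apply: ltn_expl.
have p0 : 0 < (2 : R) ^+ n by apply: exprn_gt0.
have w0 : 0 <= z * 2 ^+ n by nra.
set m := Num.trunc (z * 2 ^+ n).
have /andP [m1 m2] := truncn_itv w0.
have key : x * 2 ^+ n < (z * 2 ^+ n - 1) * u.
  have : u < (z * u - x) * 2 ^+ n.
    by rewrite -ltr_pdivrMl ?subr_gt0 // mulrC.
  nra.
have mpos : (0 < m)%N.
  rewrite lt0n; apply/negP => /eqP m0; move: m2; rewrite -/m m0 /= => m2.
  nra.
exists n, m.-1; rewrite prednK //; split => //.
nra.
Qed.

End Grid.


Section L.
Context {d : measure_display} {T : measurableType d} {R : realType}.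
Variable (P : probability T R).

Definition hh (n : nat) : R := 2 ^+ n.
Lemma hh_gt0 n : 0 < hh n. Proof. exact: exprn_gt0. Qed.

Definition Iset (n k : nat) (b : R) : set R :=
  [set z | k.+1%:R <= z * hh n /\ z * hh n < k.+2%:R /\ z <= b].
Definition cval (x : R) n k : R := x * hh n / k.+1%:R.

Lemma mIset n k b : measurable (Iset n k b).
Proof.
have mm : measurable_fun setT (fun z : R => z * hh n).
  exact: measurable_realfun.mulrr_measurable.
rewrite /Iset (_ : [set z | _ /\ _ /\ _] = [set z | k.+1%:R <= z * hh n] `&`
   ([set z | 0 < k.+2%:R - z * hh n] `&` [set z | z <= b])); last first.
  by apply/seteqP; split=> z /=; rewrite subr_gt0.
apply: measurableI; first exact: (mge (fun z : R => z * hh n) _ mm).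
apply: measurableI; last first.
  have := mle (fun z : R => z) b (@measurable_id _ _ _). exact.
exact: (mlt (fun z : R => k.+2%:R - z * hh n) 0 (measurable_realfun.measurable_funB (measurable_cst _) mm)).
Qed.


Lemma Lstep (Z U : T -> R) (G H : set T) (eps M b x : R) :
  measurable_fun setT Z -> measurable_fun setT U -> measurable G -> measurable H ->
  0 < b -> 0 < x -> M * b < x -> 0 <= eps ->
  (forall (I : set R) c, measurable I -> M < c ->
     (P (G `&` ([set t | I (Z t)] `&` [set t | (c < U t)%R])) <=
      eps%:E * P (H `&` ([set t | I (Z t)] `&` [set t | (c < U t)%R])))%E) ->
  (P (G `&` (([set t | (0 < Z t)%R] `&` [set t | (Z t <= b)%R]) `&` [set t | (x < Z t * U t)%R])) <=
   eps%:E * P (H `&` [set t | (x < Z t * U t)%R]))%E.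
Proof.
move=> mZ mU mG mH b0 x0 Mbx e0 hyp.
pose F n k := [set t | Iset n k b (Z t)] `&` [set t | cval x n k < U t].
pose D n := \bigcup_k F n k.
have mF n k : measurable (F n k).
  apply: measurableI; first exact: mpre (mIset n k b).
  exact: mlt.
have mD n : measurable (D n) by apply: bigcupT_measurable.
have mS : measurable [set t | x < Z t * U t].
  by apply: mlt; exact: measurable_realfun.measurable_funM.
have step1 n : (P (G `&` D n) <= eps%:E * P (H `&` D n))%E.
  rewrite /D !setI_bigcupr !measure_bigcup //; first last.
  - move=> i j _ _ [t [[_ [/= hi _]] [_ [/= hj _]]]].
    by case: hi => [h1 [h2 _]]; case: hj => [h3 [h4 _]]; exact: (@grid_uniq R _ _ _ h1 h2 h3 h4).
  - by move=> i _; apply: measurableI.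
  - move=> i j _ _ [t [[_ [/= hi _]] [_ [/= hj _]]]].
    by case: hi => [h1 [h2 _]]; case: hj => [h3 [h4 _]]; exact: (@grid_uniq R _ _ _ h1 h2 h3 h4).
  - by move=> i _; apply: measurableI.
  rewrite -nneseriesZl; last by move=> *; apply: measure_ge0.
  apply: lee_nneseries; first by move=> *; apply: measure_ge0.
  move=> k _.
  case: (boolP (M < cval x n k)) => hc.
    exact: (hyp _ _ (mIset n k b) hc).
  rewrite (_ : G `&` F n k = set0); first by rewrite measure0; apply: mule_ge0 => //; apply: measure_ge0.
  apply/seteqP; split => // t [_ [/= [h1 [h2 h3]] _]].
  move: hc; rewrite /cval ltr_pdivlMr // => /negP; apply.
  have hp := hh_gt0 n; have kp : (0 : R) < k.+1%:R by [].
  case: (ltP M 0) => Ms; first nra.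
  have : M * k.+1%:R <= M * (Z t * hh n) by apply: ler_wpM2l.
  have : M * (Z t * hh n) <= M * (b * hh n) by apply: ler_wpM2l => //; apply: ler_wpM2r => //; apply: ltW.
  nra.
have step2 n : D n `<=` [set t | x < Z t * U t].
  move=> t [k _ [/= [h1 [h2 h3]]]]; rewrite /cval ltr_pdivrMr // => h4.
  have hp := hh_gt0 n; have kp : (0 : R) < k.+1%:R by [].
  have u0 : 0 < U t by nra.
  have : k.+1%:R * U t <= Z t * hh n * U t by apply: ler_wpM2r => //; apply: ltW.
  move=> h5; rewrite -(ltr_pM2r hp); nra.
have mono : {homo (fun n => G `&` D n) : n m / (n <= m)%N >-> (n <= m)%O}.
  apply/nondecreasing_seqP => n; rewrite subsetEset; apply: setIS.
  move=> t [k _ [/= [h1 [h2 h3]]]]; rewrite /cval ltr_pdivrMr // [U t * _]mulrC => h4.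
  have [k' [a1 a2 a3]] := @grid_mono R _ _ _ _ _ (hh_gt0 n) x0 h1 h2 h4.
  have hS : hh n.+1 = 2 * hh n by rewrite /hh exprS.
  exists k' => //; split; rewrite /= /Iset /cval hS.
    by split; [|split].
  by rewrite ltr_pdivrMr // [U t * _]mulrC.
have cover : G `&` (([set t | (0 < Z t)%R] `&` [set t | (Z t <= b)%R]) `&` [set t | (x < Z t * U t)%R])
    `<=` \bigcup_n (G `&` D n).
  move=> t [Gt [[z0 zb] xzu]].
  have [n [k [a1 a2 a3]]] := @grid_cover R _ _ _ z0 x0 xzu.
  exists n => //; split => //; exists k => //; split; first by split; [|split].
  by rewrite /= /cval ltr_pdivrMr // [U t * _]mulrC.
have mGD n : measurable (G `&` D n) by apply: measurableI.
have cv := nondecreasing_cvg_mu (mu := P) mGD (bigcupT_measurable _ mGD) mono.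
apply: (@le_trans _ _ (P (\bigcup_n (G `&` D n)))).
  apply: Ple cover; last exact: bigcupT_measurable.
  apply: measurableI => //; apply: measurableI; [apply: measurableI; [exact: mlt|exact: mle]|exact: mS].
rewrite -(cvg_lim _ cv) //; apply: lime_le; first by apply/cvgP: cv.
apply: nearW => n /=.
apply: le_trans (step1 n) _; apply: lee_wpmul2l; first by rewrite lee_fin.
apply: Ple; [exact: measurableI|exact: measurableI|].
by apply: setIS; apply: step2.
Qed.
End L.

Ltac mfun := first [ assumption
  | apply: measurable_realfun.measurable_funM; mfun
  | apply: (measurableT_comp (@measurable_realfun.normr_measurable _ setT)); mfun
  | apply: measurable_cst ].
Ltac mes := repeat first [ assumption | apply: measurableI
  | apply: mlt; mfun | apply: mle; mfun | apply: mge; mfun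
  | apply: mpre; [mfun|assumption] ].

Section K.
Context {d : measure_display} {T : measurableType d} {R : realType}.
Variable (P : probability T R).

Lemma seteqT (A B : set T) : (forall t, A t <-> B t) -> A = B.
Proof. by move=> h; apply/seteqP; split=> t /h. Qed.

Lemma mgtR (c : R) : measurable [set r : R | c < r].
Proof.
rewrite (_ : [set r | c < r] = [set` `]c, +oo[]); first exact: measurable_itv.
by apply/seteqP; split=> r /=; rewrite in_itv /= andbT.
Qed.

Lemma mabsR (c : R) : measurable [set r : R | c < `|r|].
Proof.
have := mlt (fun r : R => `|r|) c (@measurable_realfun.normr_measurable R setT).
by [].
Qed.

Lemma Kmain (Zw Z1 Z2 W U1 U2 : T -> R) (bw b1 b2 eps M : R) :
  measurable_fun setT Zw -> measurable_fun setT Z1 -> measurable_fun setT Z2 ->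
  measurable_fun setT W -> measurable_fun setT U1 -> measurable_fun setT U2 ->
  0 < bw -> 0 < b1 -> 0 < b2 -> 0 <= eps ->
  P [set t | 0 <= Zw t] = 1%E -> P [set t | Zw t <= bw] = 1%E ->
  P [set t | 0 <= Z1 t] = 1%E -> P [set t | Z1 t <= b1] = 1%E ->
  P [set t | 0 <= Z2 t] = 1%E -> P [set t | Z2 t <= b2] = 1%E ->
  (forall I1 I2 Bw B1 B2 : set R, measurable I1 -> measurable I2 -> measurable Bw ->
     measurable B1 -> measurable B2 ->
     P (([set t | I1 (Z1 t)] `&` [set t | I2 (Z2 t)]) `&`
        ([set t | Bw (W t)] `&` ([set t | B1 (U1 t)] `&` [set t | B2 (U2 t)]))) =
     (P ([set t | I1 (Z1 t)] `&` [set t | I2 (Z2 t)]) *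
      P ([set t | Bw (W t)] `&` ([set t | B1 (U1 t)] `&` [set t | B2 (U2 t)])))%E) ->
  (forall a b c, M < a -> M < b -> M < c ->
     (P ([set t | (a < `|W t|)%R] `&` ([set t | (b < U1 t)%R] `&` [set t | (c < U2 t)%R])) <=
      eps%:E * P ([set t | (b < U1 t)%R] `&` [set t | (c < U2 t)%R]))%E) ->
  forall a x y, M * bw < a -> M * b1 < x -> M * b2 < y -> 0 < x -> 0 < y ->
    (P ([set t | (a < `|Zw t * W t|)%R] `&`
        ([set t | (x < Z1 t * U1 t)%R] `&` [set t | (y < Z2 t * U2 t)%R])) <=
     eps%:E * P ([set t | (x < Z1 t * U1 t)%R] `&` [set t | (y < Z2 t * U2 t)%R]))%E.
Proof.
move=> mZw mZ1 mZ2 mW mU1 mU2 bw0 b10 b20 e0 pw0 pwb p10 p1b p20 p2b ind hg.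
move=> a x y Ma Mx My x0 y0.
set a' := a / bw.
have Ma' : M < a' by rewrite /a' ltr_pdivlMr.
pose G0 := [set t | a' < `|W t|].
pose A1 (I : set R) (c : R) := [set t | I (Z1 t)] `&` [set t | c < U1 t].
pose S2 := ([set t | 0 < Z2 t] `&` [set t | Z2 t <= b2]) `&` [set t | y < Z2 t * U2 t].
pose S2' := [set t | y < Z2 t * U2 t].
have mG0 : measurable G0 by mes.
have mA1 I c : measurable I -> measurable (A1 I c) by move=> mI; rewrite /A1; mes.
have mS2 : measurable S2 by rewrite /S2; mes.
have mS2' : measurable S2' by rewrite /S2'; mes.
have base I1 c1 I c : measurable I1 -> measurable I -> M < c1 -> M < c ->
    (P ((G0 `&` A1 I1 c1) `&` ([set t | I (Z2 t)] `&` [set t | (c < U2 t)%R])) <=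
     eps%:E * P (A1 I1 c1 `&` ([set t | I (Z2 t)] `&` [set t | (c < U2 t)%R])))%E.
  move=> mI1 mI Mc1 Mc.
  have e1 := ind I1 I _ _ _ mI1 mI (mabsR a') (mgtR c1) (mgtR c).
  have e2 := ind I1 I setT _ _ mI1 mI measurableT (mgtR c1) (mgtR c).
  rewrite (_ : (G0 `&` A1 I1 c1) `&` _ = ([set t | I1 (Z1 t)] `&` [set t | I (Z2 t)]) `&`
        ([set t | a' < `|W t|] `&` ([set t | c1 < U1 t] `&` [set t | c < U2 t]))); last first.
    by apply: seteqT => t /=; rewrite /G0 /A1 /=; tauto.
  rewrite (_ : A1 I1 c1 `&` _ = ([set t | I1 (Z1 t)] `&` [set t | I (Z2 t)]) `&`
        ([set t | setT (W t)] `&` ([set t | c1 < U1 t] `&` [set t | c < U2 t]))); last first.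
    by apply: seteqT => t /=; rewrite /A1 /=; tauto.
  rewrite e1 e2 (_ : [set t | setT (W t)] `&` _ = [set t | c1 < U1 t] `&` [set t | c < U2 t]); last first.
    by apply: seteqT => t /=; tauto.
  rewrite muleCA; apply: lee_wpmul2l; first exact: measure_ge0.
  exact: hg.
have step1 I1 c1 : measurable I1 -> M < c1 ->
    (P ((G0 `&` A1 I1 c1) `&` S2) <= eps%:E * P (A1 I1 c1 `&` S2'))%E.
  move=> mI1 Mc1.
  apply: (@Lstep _ _ _ P Z2 U2 (G0 `&` A1 I1 c1) (A1 I1 c1) eps M b2 y) => //.
  - by apply: measurableI => //; apply: mA1.
  - exact: mA1.
  - by move=> I c mI Mc; apply: base.
pose S1 := ([set t | 0 < Z1 t] `&` [set t | Z1 t <= b1]) `&` [set t | x < Z1 t * U1 t].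
pose S1' := [set t | x < Z1 t * U1 t].
have step2 : (P ((G0 `&` S2) `&` S1) <= eps%:E * P (S2' `&` S1'))%E.
  apply: (@Lstep _ _ _ P Z1 U1 (G0 `&` S2) S2' eps M b1 x) => //.
  - exact: measurableI.
  - move=> I c mI Mc.
    have := step1 I c mI Mc.
    rewrite (_ : (G0 `&` A1 I c) `&` S2 = (G0 `&` S2) `&` ([set t | I (Z1 t)] `&` [set t | (c < U1 t)%R])); last first.
      by apply: seteqT => t; rewrite /A1 /=; tauto.
    rewrite (_ : A1 I c `&` S2' = S2' `&` ([set t | I (Z1 t)] `&` [set t | (c < U1 t)%R])) //.
    by apply: seteqT => t; rewrite /A1 /=; tauto.
rewrite (_ : [set t | (x < Z1 t * U1 t)%R] `&` [set t | (y < Z2 t * U2 t)%R] = S2' `&` S1'); last first.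
  by apply: seteqT => t; rewrite /S1' /S2' /=; tauto.
apply: le_trans step2.
set N := [set t | (a < `|Zw t * W t|)%R] `&` (S2' `&` S1').
have mN : measurable N by rewrite /N; mes.
rewrite -(as1 P N _ mN _ pw0); last by mes.
rewrite -(as1 P _ _ _ _ pwb); [|by mes|by mes].
rewrite -(as1 P _ _ _ _ p10); [|by mes|by mes].
rewrite -(as1 P _ _ _ _ p1b); [|by mes|by mes].
rewrite -(as1 P _ _ _ _ p20); [|by mes|by mes].
rewrite -(as1 P _ _ _ _ p2b); [|by mes|by mes].
apply: Ple; [by mes|by rewrite /S1 /S2; mes|].
move=> t [[[[[[[ha [hy hx]] w0] wb] z10] z1b] z20] z2b].
rewrite /S1' /S2' /= in ha hx hy w0 wb z10 z1b z20 z2b.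
have z1p : 0 < Z1 t.
  rewrite lt_def z10 andbT; apply/eqP => h; rewrite h mul0r in hx; lra.
have z2p : 0 < Z2 t.
  rewrite lt_def z20 andbT; apply/eqP => h; rewrite h mul0r in hy; lra.
split; [split; [|by split]|by split].
rewrite /G0 /= /a' ltr_pdivrMr //.
apply: (lt_le_trans ha); rewrite normrM (ger0_norm w0) mulrC.
by apply: ler_wpM2l => //.
Qed.
End K.

Section Dsec.
Context {d : measure_display} {T : measurableType d} {R : realType}.
Variable (P : probability T R).

Lemma pos_part (Z : T -> R) : measurable_fun setT Z ->
  P [set t | 0 <= Z t] = 1%E -> P [set t | Z t = 0] != 1%E ->
  exists2 dl : R, 0 < dl & (0 < P [set t | (dl < Z t)%R])%E.
Proof.
move=> mZ p0 p1; apply: contrapT => hn.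
have h0 n : P [set t | n.+1%:R^-1 < Z t] = 0%E.
  apply/eqP; rewrite eq_le measure_ge0 andbT leNgt; apply/negP => hp.
  by apply: hn; exists n.+1%:R^-1.
have mz : measurable [set t | Z t = 0].
  have := mpre Z [set 0] mZ (measurable_set1 0). by [].
have hpos : P [set t | 0 < Z t] = 0%E.
  apply/eqP; rewrite eq_le measure_ge0 andbT.
  rewrite -(@eseries0 R (fun n => P [set t | n.+1%:R^-1 < Z t]) 0%N xpredT (fun n _ _ => h0 n)).
  apply: measure_sigma_subadditive; [by move=> n; apply: mlt|by apply: mlt|].
  move=> t /= zt; exists (Num.trunc (Z t)^-1) => //=.
  rewrite -[X in _ < X]invrK ltf_pV2 ?posrE ?invr_gt0 //; exact: truncnS_gt.
move/negP: p1; apply; apply/eqP/le_anti; rewrite probability_le1 //=.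
rewrite -p0 (_ : [set t | 0 <= Z t] = [set t | Z t = 0] `|` [set t | 0 < Z t]); last first.
  apply/seteqP; split=> t /=.
    by rewrite le_eqVlt => /orP [/eqP ->|]; [left|right].
  by case=> [->|/ltW].
apply: le_trans (measureU2 _ mz (mlt Z 0 mZ)) _.
apply: geeDl; rewrite le_eqVlt; apply/orP; left; apply/eqP; exact: hpos.
Qed.


Lemma unb_prod (Z W : T -> R) : measurable_fun setT Z -> measurable_fun setT W ->
  P [set t | 0 <= Z t] = 1%E -> P [set t | Z t = 0] != 1%E ->
  unbounded_above P W ->
  (forall I B : set R, measurable I -> measurable B ->
     P ([set t | I (Z t)] `&` [set t | B (W t)]) =
     (P [set t | I (Z t)] * P [set t | B (W t)])%E) ->
  unbounded_above P (fun t => Z t * W t).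
Proof.
move=> mZ mW p0 p1 unb ind x.
have [dl dl0 hdl] := pos_part Z mZ p0 p1.
set c := `|x| / dl.
have hw := unb c.
apply: (@lt_le_trans _ _ (P ([set t | dl < Z t] `&` [set t | c < W t]))).
  have := ind [set r | dl < r] [set r | c < r] (mgtR dl) (mgtR c).
  move=> /= ->; exact: mule_gt0.
apply: Ple; [by mes|by apply: mlt; mfun|].
move=> t [/= h1 h2].
have c0 : 0 <= c by rewrite /c divr_ge0 // ltW.
have w0 : 0 < W t by apply: le_lt_trans c0 h2.
move: h2; rewrite /c ltr_pdivrMr // => h2.
have := ler_norm x; rewrite /=; nra.
Qed.

Lemma condP_le A B eps : measurable A -> measurable B -> `|condP P A B| < eps ->
  (P (A `&` B) <= eps%:E * P B)%E.
Proof.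
rewrite /condP => mA mB h.
have fAB := Pfin P _ (measurableI _ _ mA mB); have fB := Pfin P _ mB.
rewrite -(fineK fAB) -(fineK fB) -EFinM lee_fin.
have hB0 : 0 <= fine (P B) by apply: fine_ge0; apply: measure_ge0.
have hAB0 : 0 <= fine (P (A `&` B)) by apply: fine_ge0; apply: measure_ge0.
have hle : fine (P (A `&` B)) <= fine (P B).
  by apply: fine_le => //; apply: measureIr.
case: (eqVneq (fine (P B)) 0) => hz.
  have e0 : 0 <= eps by apply: le_trans (normr_ge0 _) (ltW h).
  by rewrite hz mulr0; rewrite hz in hle.
have hp : 0 < fine (P B) by rewrite lt_def hz.
move: h; rewrite ger0_norm ?divr_ge0 // ltr_pdivrMr // => h.
exact: ltW.
Qed.

Lemma condP_lt A B eps e : measurable A -> measurable B -> 0 <= eps -> eps < e ->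
  (P (A `&` B) <= eps%:E * P B)%E -> `|condP P A B| < e.
Proof.
rewrite /condP => mA mB e0 ee h.
have fAB := Pfin P _ (measurableI _ _ mA mB); have fB := Pfin P _ mB.
move: h; rewrite -(fineK fAB) -(fineK fB) -EFinM lee_fin => h.
have hB0 : 0 <= fine (P B) by apply: fine_ge0; apply: measure_ge0.
have hAB0 : 0 <= fine (P (A `&` B)) by apply: fine_ge0; apply: measure_ge0.
case: (eqVneq (fine (P B)) 0) => hz.
  by rewrite hz invr0 mulr0 normr0; apply: le_lt_trans ee.
have hp : 0 < fine (P B) by rewrite lt_def hz.
rewrite ger0_norm ?divr_ge0 // ltr_pdivrMr //.
apply: le_lt_trans h _; by rewrite ltr_pM2r.
Qed.

End Dsec.

Ltac mfun ::= first [ assumption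
  | match goal with H : forall _, measurable_fun _ _ |- _ => apply: H end
  | apply: measurable_realfun.measurable_funM; mfun
  | apply: (measurableT_comp (@measurable_realfun.normr_measurable _ setT)); mfun
  | apply: measurable_cst ].

Section Esec.
Context {d : measure_display} {T : measurableType d} {R : realType}.

Lemma ev1 (p q : nat) (U : 'I_p -> T -> R) (V : 'I_q -> T -> R) i (S : set R) :
  [set t | (forall l, (if l == i then S else setT) (U l t)) /\ (forall l, (@setT R) (V l t))]
  = [set t | S (U i t)].
Proof.
apply/seteqP; split=> t /=.
  by case=> h _; have := h i; rewrite eqxx.
by move=> h; split=> // l; case: eqP => [->|].
Qed.

Lemma ev1' (p q : nat) (U : 'I_p -> T -> R) (V : 'I_q -> T -> R) j (S : set R) :
  [set t | (forall l, (@setT R) (U l t)) /\ (forall l, (if l == j then S else setT) (V l t))]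
  = [set t | S (V j t)].
Proof.
apply/seteqP; split=> t /=.
  by case=> _ h; have := h j; rewrite eqxx.
by move=> h; split=> // l; case: eqP => [->|].
Qed.

Lemma ev11 (p q : nat) (U : 'I_p -> T -> R) (V : 'I_q -> T -> R) i j (S S' : set R) :
  [set t | (forall l, (if l == i then S else setT) (U l t)) /\
           (forall l, (if l == j then S' else setT) (V l t))]
  = [set t | S (U i t)] `&` [set t | S' (V j t)].
Proof.
apply/seteqP; split=> t /=.
  by case=> h h'; have := h i; have := h' j; rewrite !eqxx.
by case=> h h'; split=> l; case: eqP => [->|].
Qed.

Lemma ev21 (p q : nat) (U : 'I_p -> T -> R) (V : 'I_q -> T -> R) i k j (S S' S'' : set R) :
  i != k ->
  [set t | (forall l, (if l == i then S else if l == k then S' else setT) (U l t)) /\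
           (forall l, (if l == j then S'' else setT) (V l t))]
  = [set t | S (U i t)] `&` ([set t | S' (U k t)] `&` [set t | S'' (V j t)]).
Proof.
move=> ik; apply/seteqP; split=> t /=.
  have ki : (k == i) = false by rewrite eq_sym (negbTE ik).
  case=> h h'; have := h i; have := h k; have := h' j; rewrite !eqxx ki.
  by move=> a b c; split => //; split.
case=> h [h' h'']; split=> l; last by case: eqP => [->|].
by case: eqP => [->|_] //; case: eqP => [->|].
Qed.

Lemma ev12 (p q : nat) (U : 'I_p -> T -> R) (V : 'I_q -> T -> R) i j k (S S' S'' : set R) :
  j != k ->
  [set t | (forall l, (if l == i then S else setT) (U l t)) /\
           (forall l, (if l == j then S' else if l == k then S'' else setT) (V l t))]
  = [set t | S' (V j t)] `&` ([set t | S (U i t)] `&` [set t | S'' (V k t)]).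
Proof.
move=> jk; apply/seteqP; split=> t /=.
  have kj : (k == j) = false by rewrite eq_sym (negbTE jk).
  case=> h h'; have := h i; have := h' j; have := h' k; rewrite !eqxx kj.
  by move=> a b c; split => //; split.
case=> h [h' h'']; split=> l; first by case: eqP => [->|].
by case: eqP => [->|_] //; case: eqP => [->|].
Qed.

Lemma thr3 (M0 b1 b2 b3 a : R) : 0 < b1 -> 0 < b2 -> 0 < b3 ->
  `|M0| * (b1 + b2 + b3) + 1 < a -> [/\ M0 * b1 < a, M0 * b2 < a, M0 * b3 < a & 0 < a].
Proof.
move=> h1 h2 h3 h.
have n0 := normr_ge0 M0; have nM := ler_norm M0.
have s0 : 0 <= `|M0| * (b1 + b2 + b3) by apply: mulr_ge0 => //; lra.
have k1 : M0 * b1 <= `|M0| * b1 by apply: ler_wpM2r => //; apply: ltW.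
have k2 : M0 * b2 <= `|M0| * b2 by apply: ler_wpM2r => //; apply: ltW.
have k3 : M0 * b3 <= `|M0| * b3 by apply: ler_wpM2r => //; apply: ltW.
have e1 : `|M0| * (b1 + b2 + b3) = `|M0| * b1 + `|M0| * b2 + `|M0| * b3 by ring.
have q1 : 0 <= `|M0| * b1 by apply: mulr_ge0 => //; apply: ltW.
have q2 : 0 <= `|M0| * b2 by apply: mulr_ge0 => //; apply: ltW.
have q3 : 0 <= `|M0| * b3 by apply: mulr_ge0 => //; apply: ltW.
split; lra.
Qed.

End Esec.

Theorem lemma2p1 (d : measure_display) (T : measurableType d) (R : realType)
  (P : probability T R) (n m : nat)
  (X : 'I_n -> T -> R) (Y : 'I_m -> T -> R)
  (Theta : 'I_n -> T -> R) (Delta : 'I_m -> T -> R) :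
  (forall i, measurable_fun [set: T] (X i)) ->
  (forall j, measurable_fun [set: T] (Y j)) ->
  (forall i, measurable_fun [set: T] (Theta i)) ->
  (forall j, measurable_fun [set: T] (Delta j)) ->
  GTAI P X Y ->
  (forall i, P [set t | 0 <= Theta i t] = 1%E) ->
  (forall j, P [set t | 0 <= Delta j t] = 1%E) ->
  (forall i, P [set t | Theta i t = 0] != 1%E) ->
  (forall j, P [set t | Delta j t = 0] != 1%E) ->
  (forall i, exists2 b : R, 0 < b & P [set t | Theta i t <= b] = 1%E) ->
  (forall j, exists2 b : R, 0 < b & P [set t | Delta j t <= b] = 1%E) ->
  indep_vectors P Theta Delta X Y ->
  GTAI P (fun i t => Theta i t * X i t) (fun j t => Delta j t * Y j t).
Proof.
move=> mX mY mTh mDe [uX uY gi gii] th0 de0 thn den thb deb ind.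
have mif (p : nat) (i : 'I_p) (S : set R) : measurable S ->
    forall l, measurable (if l == i then S else setT).
  by move=> mS l; case: ifP.
have mif2 (p : nat) (i k : 'I_p) (S S' : set R) : measurable S -> measurable S' ->
    forall l, measurable (if l == i then S else if l == k then S' else setT).
  by move=> mS mS' l; case: ifP => _ //; case: ifP.
have mT (p : nat) : forall l : 'I_p, measurable (@setT R) by move=> *; exact: measurableT.
split.
- move=> i; apply: (@unb_prod _ _ _ P _ _ (mTh i) (mX i) (th0 i) (thn i) (uX i)).
  move=> I B mI mB.
  have := ind _ (fun _ => setT) _ (fun _ => setT) (mif _ i I mI) (mT _) (mif _ i B mB) (mT _).
  by cbv zeta; rewrite !ev1.
- move=> j; apply: (@unb_prod _ _ _ P _ _ (mDe j) (mY j) (de0 j) (den j) (uY j)).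
  move=> I B mI mB.
  have := ind (fun _ => setT) _ (fun _ => setT) _ (mT _) (mif _ j I mI) (mT _) (mif _ j B mB).
  by cbv zeta; rewrite !ev1'.
- move=> i k j ik e e0.
  have [bw bw0 hbw] := thb i; have [b1 b10 hb1] := thb k; have [b2 b20 hb2] := deb j.
  have [M0 hM0] := gi i k j ik (e / 2) (divr_gt0 e0 (ltr0Sn _ 1)).
  exists (`|M0| * (bw + b1 + b2) + 1) => a x y ha hx hy.
  have [ha1 _ _ ha0] := thr3 _ _ _ _ _ bw0 b10 b20 ha.
  have [_ hx1 _ hx0] := thr3 _ _ _ _ _ bw0 b10 b20 hx.
  have [_ _ hy1 hy0] := thr3 _ _ _ _ _ bw0 b10 b20 hy.
  apply: (@condP_lt _ _ _ P _ _ (e / 2) e) => /=; [by mes|by mes|lra|lra|].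
  apply: (@Kmain _ _ _ P (Theta i) (Theta k) (Delta j) (X i) (X k) (Y j) bw b1 b2 (e / 2) M0) => //; try lra.
  + move=> I1 I2 Bw B1 B2 mI1 mI2 mBw mB1 mB2.
    have := ind _ _ _ _ (mif _ k I1 mI1) (mif _ j I2 mI2) (mif2 _ i k Bw B1 mBw mB1) (mif _ j B2 mB2).
    by cbv zeta; rewrite ev11 ev21.
  + move=> a' b' c' h1 h2 h3; apply: condP_le; [by mes|by mes|exact: hM0].
- move=> j k i jk e e0.
  have [bw bw0 hbw] := deb j; have [b1 b10 hb1] := thb i; have [b2 b20 hb2] := deb k.
  have [M0 hM0] := gii j k i jk (e / 2) (divr_gt0 e0 (ltr0Sn _ 1)).
  exists (`|M0| * (bw + b1 + b2) + 1) => a x y ha hx hy.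
  have [ha1 _ _ ha0] := thr3 _ _ _ _ _ bw0 b10 b20 ha.
  have [_ hx1 _ hx0] := thr3 _ _ _ _ _ bw0 b10 b20 hx.
  have [_ _ hy1 hy0] := thr3 _ _ _ _ _ bw0 b10 b20 hy.
  apply: (@condP_lt _ _ _ P _ _ (e / 2) e) => /=; [by mes|by mes|lra|lra|].
  apply: (@Kmain _ _ _ P (Delta j) (Theta i) (Delta k) (Y j) (X i) (Y k) bw b1 b2 (e / 2) M0) => //; try lra.
  + move=> I1 I2 Bw B1 B2 mI1 mI2 mBw mB1 mB2.
    have := ind _ _ _ _ (mif _ i I1 mI1) (mif _ k I2 mI2) (mif _ i B1 mB1) (mif2 _ j k Bw B2 mBw mB2).
    by cbv zeta; rewrite ev11 ev12.
  + move=> a' b' c' h1 h2 h3; apply: condP_le; [by mes|by mes|exact: hM0].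
Qed.
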